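(* Let $U=(U_{ij})_{i,j=1}^M$, $U_{ij}\in M_M(\mathbb C)$, and $V=(V_{ab})_{a,b=1}^N$, $V_{ab}\in M_N(\mathbb C)$, be projective models, such that $U$ and $V'$ are positive. Let $Q\in M_{M\times N}(\mathbb T)$ and $W=U\otimes_QV$. Then for all integers $p,r\geq1$, $$|c_p^r(W)|\leq c_p^r(U)\,c_p^r(V).$$
   Context: A square matrix $(P_{ij})$ with entries in a $C^*$-algebra is magic if all $P_{ij}$ are orthogonal projections and each row and each column sums to $1$. For $U=(U_{ij})_{i,j=1}^n$ with $U_{ij}\in M_n(\mathbb C)$, define $U'=(U'_{kl})$ by $(U'_{kl})_{ij}=(U_{ij})_{kl}$. $U$ is a projective model if both $U$ and $U'$ are magic. $U$ is positive if $tr(U_{i_1j_1}\cdots U_{i_pj_p})\geq0$ for all $p$ and all indices, where $tr$ is the normalized trace on $M_n(\mathbb C)$. $T_p^U\in M_{n^p}(\mathbb C)$ has entries $(T_p^U)_{i_1\dots i_p,j_1\dots j_p}=tr(U_{i_1j_1}\cdots U_{i_pj_p})$, and $c_p^r(U)=Tr((T_p^U)^r)$ (non-normalized trace). The deformed tensor product $W=U\otimes_QV$ is the $MN\times MN$ matrix with entries in $M_{MN}(\mathbb C)$ given by $(W_{ia,jb})_{kc,ld}=\frac{Q_{ic}Q_{jd}}{Q_{id}Q_{jc}}(U_{ij})_{kl}(V_{ab})_{cd}$, $i,j,k,l\in\{1,\dots,M\}$, $a,b,c,d\in\{1,\dots,N\}$. *)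

(* Defs.v *)
From HB Require Import structures.
From mathcomp Require Import all_boot all_order all_algebra.
From mathcomp Require Import complex.
From mathcomp Require Import reals.
Set Implicit Arguments. Unset Strict Implicit. Unset Printing Implicit Defensive.
Import Order.TTheory GRing.Theory Num.Theory.
Local Open Scope ring_scope.
Local Open Scope complex_scope.

Section Defs.
Variable R : realType.
Local Notation C := R[i].

Definition adjmx (n : nat) (A : 'M[C]_n) : 'M[C]_n := \matrix_(i, j) (A j i)^*.

Definition is_orth_proj (n : nat) (P : 'M[C]_n) : Prop :=
  P *m P = P /\ adjmx P = P.

Definition magic (n d : nat) (P : 'I_n -> 'I_n -> 'M[C]_d) : Prop :=
  (forall i j, is_orth_proj (P i j)) /\
  (forall i, \sum_(j < n) P i j = 1%:M) /\
  (forall j, \sum_(i < n) P i j = 1%:M).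

Definition primemx (n : nat) (U : 'I_n -> 'I_n -> 'M[C]_n) : 'I_n -> 'I_n -> 'M[C]_n :=
  fun k l => \matrix_(i, j) (U i j) k l.

Definition projective_model (n : nat) (U : 'I_n -> 'I_n -> 'M[C]_n) : Prop :=
  magic U /\ magic (primemx U).

Definition ntr (n : nat) (A : 'M[C]_n) : C := \tr A / n%:R.

Definition wordmx (n p : nat) (U : 'I_n -> 'I_n -> 'M[C]_n)
  (i j : 'I_p -> 'I_n) : 'M[C]_n :=
  foldr (fun k (A : 'M[C]_n) => U (i k) (j k) *m A) 1%:M (enum 'I_p).

Definition positive_model (n : nat) (U : 'I_n -> 'I_n -> 'M[C]_n) : Prop :=
  forall (p : nat) (i j : 'I_p -> 'I_n), 0 <= ntr (wordmx U i j).

(* T_p^U, indexed by multi-indices {ffun 'I_p -> 'I_n} (via an enumeration) *)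
Definition Tmx (n p : nat) (U : 'I_n -> 'I_n -> 'M[C]_n) :
  'M[C]_#|{: {ffun 'I_p -> 'I_n}}| :=
  \matrix_(x, y) ntr (wordmx U (fun k => (enum_val x : {ffun 'I_p -> 'I_n}) k)
                           (fun k => (enum_val y : {ffun 'I_p -> 'I_n}) k)).

(* c_p^r(U) = Tr((T_p^U)^r), non-normalized trace *)
Definition cpr (n : nat) (U : 'I_n -> 'I_n -> 'M[C]_n) (p r : nat) : C :=
  \tr ((Tmx p U) ^+ r).

Definition unpair (M N : nat) (x : 'I_(M * N)) : 'I_M * 'I_N :=
  enum_val (cast_ord (esym (mxvec_cast M N)) x).

Definition deformed_tensor (M N : nat) (Q : 'M[C]_(M, N))
  (U : 'I_M -> 'I_M -> 'M[C]_M) (V : 'I_N -> 'I_N -> 'M[C]_N) :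
  'I_(M * N) -> 'I_(M * N) -> 'M[C]_(M * N) :=
  fun ia jb => \matrix_(kc, ld)
    let: (i, a) := unpair ia in let: (j, b) := unpair jb in
    let: (k, c) := unpair kc in let: (l, d) := unpair ld in
    (Q i c * Q j d) / (Q i d * Q j c) * (U i j) k l * (V a b) c d.

End Defs.

(* Main.v *)
Require Import Defs.
From HB Require Import structures.
From mathcomp Require Import all_boot all_order all_algebra.
From mathcomp Require Import complex.
From mathcomp Require Import reals.
From mathcomp Require Import ring.
Set Implicit Arguments. Unset Strict Implicit. Unset Printing Implicit Defensive.
Import Order.TTheory GRing.Theory Num.Theory.
Local Open Scope ring_scope.
Local Open Scope complex_scope.

Section Aux.
Variable R : realType.
Local Notation C := R[i].

Lemma sum_ind (J : finType) (a : J) (F : J -> C) :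
  \sum_j (j == a)%:R * F j = F a.
Proof.
rewrite (bigD1 a) //= eqxx mul1r big1 ?addr0 // => j /negPf ->.
by rewrite mul0r.
Qed.

Lemma indA (a b : bool) : ((a && b)%:R : C) = a%:R * b%:R.
Proof. by case: a; case: b; rewrite /= ?mulr1 ?mulr0. Qed.

Lemma sum_bij (A B : finType) (h : A -> B) (g : B -> A) :
  cancel h g -> cancel g h -> forall F : B -> C, \sum_b F b = \sum_a F (h a).
Proof.
move=> hK gK F; rewrite (reindex h) //; exists g => x _; [exact: hK | exact: gK].
Qed.

Definition fcons (J : finType) n (j : J) (x : {ffun 'I_n -> J}) : {ffun 'I_n.+1 -> J} :=
  [ffun k => if unlift ord0 k is Some k' then x k' else j].

Lemma fcons0 (J : finType) n (j : J) x : @fcons J n j x ord0 = j.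
Proof. by rewrite ffunE unlift_none. Qed.

Lemma fconsS (J : finType) n (j : J) x k : @fcons J n j x (lift ord0 k) = x k.
Proof. by rewrite ffunE liftK. Qed.

Lemma sum_ffunS (J : finType) n (F : {ffun 'I_n.+1 -> J} -> C) :
  \sum_x F x = \sum_(j : J) \sum_(x : {ffun 'I_n -> J}) F (fcons j x).
Proof.
rewrite pair_big /=.
rewrite (@sum_bij _ _ (fun p : J * {ffun 'I_n -> J} => fcons p.1 p.2)
   (fun x => (x ord0, [ffun k => x (lift ord0 k)]))) //.
- by case=> j x /=; rewrite fcons0; congr (_, _); apply/ffunP => k; rewrite ffunE fconsS.
- move=> x; apply/ffunP => k; rewrite ffunE; case: unliftP => [k'|] -> //=.
  by rewrite ffunE.
Qed.


Lemma widen_lift0 r (t : 'I_r) :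
  widen_ord (leqnSn r.+1) (lift ord0 t) = lift ord0 (widen_ord (leqnSn r) t).
Proof. by apply: val_inj. Qed.

Lemma widen0 r : widen_ord (leqnSn r.+1) (ord0 : 'I_r.+1) = ord0.
Proof. by apply: val_inj. Qed.

Lemma ordmax_lift r : (ord_max : 'I_r.+2) = lift ord0 (ord_max : 'I_r.+1).
Proof. by apply: val_inj. Qed.

Lemma path_foldr m r (B : 'I_r -> 'M[C]_m) (u v : 'I_m) :
  (foldr (fun k A => B k *m A) 1%:M (enum 'I_r)) u v =
  \sum_(x : {ffun 'I_r.+1 -> 'I_m}) ((x ord0 == u)%:R * (x ord_max == v)%:R) *
     \prod_(t < r) B t (x (widen_ord (leqnSn r) t)) (x (lift ord0 t)).
Proof.
elim: r B u v => [|r IH] B u v.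
  have -> : enum 'I_0 = [::] by apply: size0nil; rewrite size_enum_ord.
  rewrite /= mxE sum_ffunS.
  have -> : (ord_max : 'I_1) = ord0 by apply: val_inj.
  under eq_bigr => j _ do under eq_bigr => x _ do rewrite fcons0 big_ord0 mulr1.
  under eq_bigr => j _ do rewrite sumr_const card_ffun !card_ord expn0 mulr1n.
  by rewrite sum_ind.
rewrite enum_ordSl /= foldr_map mxE.
transitivity (\sum_w B ord0 u w * \sum_(x : {ffun 'I_r.+1 -> 'I_m})
   (((x ord0 == w)%:R * (x ord_max == v)%:R) *
    \prod_(t < r) B (lift ord0 t) (x (widen_ord (leqnSn r) t)) (x (lift ord0 t)))).
  by apply: eq_bigr => w _; congr (_ * _); apply: IH.

rewrite [LHS](eq_bigr _ (fun w _ => big_distrr _ _ _)).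
rewrite [LHS]exchange_big /= [RHS]sum_ffunS [RHS]exchange_big /=.
apply: eq_bigr => x _.
under [in RHS]eq_bigr => j _ do
  rewrite fcons0 ordmax_lift fconsS big_ord_recl widen0 fconsS fcons0.
under [in RHS]eq_bigr => j _ do under eq_bigr => t _ do rewrite widen_lift0 !fconsS.
transitivity (\sum_w (w == x ord0)%:R * (B ord0 u w * ((x ord_max == v)%:R *
  \prod_(i < r) B (lift ord0 i) (x (widen_ord (leqnSn r) i)) (x (lift ord0 i))))).
  by apply: eq_bigr => w _; rewrite (eq_sym w); ring.
rewrite sum_ind.
transitivity (\sum_j (j == u)%:R * (B ord0 j (x ord0) * ((x ord_max == v)%:R *
  \prod_(i < r) B (lift ord0 i) (x (widen_ord (leqnSn r) i)) (x (lift ord0 i))))).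
  by rewrite sum_ind.
by apply: eq_bigr => j _; ring.
Qed.


Definition ctrg (I : finType) r (f : 'I_r -> I -> I -> C) : C :=
  \sum_(y : {ffun 'I_r.+1 -> I}) (y ord0 == y ord_max)%:R *
     \prod_(t < r) f t (y (widen_ord (leqnSn r) t)) (y (lift ord0 t)).

Lemma eq_ctrg (I : finType) r (f g : 'I_r -> I -> I -> C) :
  (forall t x y, f t x y = g t x y) -> ctrg f = ctrg g.
Proof.
by move=> fg; apply: eq_bigr => y _; congr (_ * _); apply: eq_bigr => t _; apply: fg.
Qed.

Lemma tr_foldr m r (B : 'I_r -> 'M[C]_m) :
  \tr (foldr (fun k A => B k *m A) 1%:M (enum 'I_r)) = ctrg (fun t x y => B t x y).
Proof.
rewrite /mxtrace.
transitivity (\sum_(u < m) \sum_(x : {ffun 'I_r.+1 -> 'I_m}) ((x ord0 == u)%:R * (x ord_max == u)%:R) *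
     \prod_(t < r) B t (x (widen_ord (leqnSn r) t)) (x (lift ord0 t))).
  by apply: eq_bigr => u _; apply: path_foldr.
rewrite exchange_big /=; apply: eq_bigr => x _.
transitivity (\sum_(u < m) (u == x ord0)%:R * ((x ord_max == u)%:R *
     \prod_(t < r) B t (x (widen_ord (leqnSn r) t)) (x (lift ord0 t)))).
  by apply: eq_bigr => u _; rewrite (eq_sym u); ring.
by rewrite sum_ind eq_sym.
Qed.

Lemma pow_foldr_seq n (A : 'M[C]_n) (T : Type) (s : seq T) :
  A ^+ size s = foldr (fun _ B => A *m B) 1%:M s.
Proof.
elim: s => [|x s IH] /=; first by rewrite expr0.
by rewrite exprS IH mulmxE.
Qed.

Lemma pow_foldr n (A : 'M[C]_n) r :
  A ^+ r = foldr (fun (_ : 'I_r) B => A *m B) 1%:M (enum 'I_r).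
Proof. by rewrite -pow_foldr_seq size_enum_ord. Qed.

Lemma tr_pow n (A : 'M[C]_n) r : \tr (A ^+ r) = ctrg (fun (_ : 'I_r) x y => A x y).
Proof. by rewrite pow_foldr tr_foldr. Qed.

Lemma ctrg_reindex (I I' : finType) (h : I -> I') (g : I' -> I) :
  cancel h g -> cancel g h -> forall r (f : 'I_r -> I' -> I' -> C),
  ctrg (fun t x y => f t (h x) (h y)) = ctrg f.
Proof.
move=> hK gK r f; rewrite /ctrg.
rewrite [RHS](@sum_bij _ _ (fun y : {ffun 'I_r.+1 -> I} => [ffun k => h (y k)])
   (fun y => [ffun k => g (y k)])).
- apply: eq_bigr => y _; rewrite !ffunE (inj_eq (can_inj hK)); congr (_ * _).
  by apply: eq_bigr => t _; rewrite !ffunE.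
- by move=> y; apply/ffunP => k; rewrite !ffunE hK.
- by move=> y; apply/ffunP => k; rewrite !ffunE gK.
Qed.

Lemma ctrg_pair (A B : finType) r (f : 'I_r -> A * B -> A * B -> C) :
  ctrg f = \sum_(ya : {ffun 'I_r.+1 -> A}) \sum_(yb : {ffun 'I_r.+1 -> B})
    ((ya ord0 == ya ord_max)%:R * (yb ord0 == yb ord_max)%:R) *
    \prod_(t < r) f t (ya (widen_ord (leqnSn r) t), yb (widen_ord (leqnSn r) t))
                      (ya (lift ord0 t), yb (lift ord0 t)).
Proof.
rewrite pair_big /= /ctrg.
rewrite (@sum_bij _ _ (fun p : {ffun 'I_r.+1 -> A} * {ffun 'I_r.+1 -> B} =>
     [ffun k => (p.1 k, p.2 k)]) (fun y => ([ffun k => (y k).1], [ffun k => (y k).2]))).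
- apply: eq_bigr => -[ya yb] _ /=; rewrite !ffunE xpair_eqE indA; congr (_ * _).
  by apply: eq_bigr => t _; rewrite !ffunE.
- by case=> ya yb; congr (_, _); apply/ffunP => k; rewrite !ffunE.
- by move=> y; apply/ffunP => k; rewrite !ffunE; case: (y k).
Qed.

End Aux.

Section Main.
Variable R : realType.
Local Notation C := R[i].

Lemma cpr_ctrg n (U : 'I_n -> 'I_n -> 'M[C]_n) p r :
  cpr U p r = ctrg (fun (_ : 'I_r) (a b : {ffun 'I_p -> 'I_n}) => ntr (wordmx U a b)).
Proof.
rewrite /cpr tr_pow -[RHS](ctrg_reindex enum_valK enum_rankK).
by apply: eq_ctrg => t x y; rewrite mxE.
Qed.

Lemma ntr_wordmx n (U : 'I_n -> 'I_n -> 'M[C]_n) p (i j : 'I_p -> 'I_n) :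
  ntr (wordmx U i j) = n%:R^-1 * ctrg (fun s (x y : 'I_n) => U (i s) (j s) x y).
Proof. by rewrite /ntr /wordmx tr_foldr mulrC. Qed.

Lemma tr_ge0 n (A : 'M[C]_n) : 0 <= ntr A -> 0 <= \tr A.
Proof.
case: n A => [|n] A; first by rewrite /mxtrace big_ord0.
move=> h; have nz : (n.+1%:R : C) != 0 by rewrite pnatr_eq0.
rewrite -(divfK nz (\tr A)).
by apply: mulr_ge0 => //; apply: ler0n.
Qed.

Lemma ffun_eq_ind (I J : finType) (f g : {ffun I -> J}) :
  ((f == g)%:R : C) = \prod_i (f i == g i)%:R.
Proof.
case: eqVneq => [->|ne]; first by rewrite big1 // => i _; rewrite eqxx.
case: (pickP (fun i => f i != g i)) => [i ni | alleq].
  by rewrite (bigD1 i) //= (negPf ni) mul0r.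
case/eqP: ne; apply/ffunP => i; move: (alleq i) => /= /negbFE /eqP //.
Qed.


Lemma prod3 (I : Type) (r : seq I) (f g h : I -> C) :
  \prod_(i <- r) (f i * g i * h i) = \prod_(i <- r) g i * \prod_(i <- r) (f i * h i).
Proof. by rewrite -big_split; apply: eq_bigr => i _ /=; rewrite mulrCA mulrA. Qed.

Section W.
Variables (M N : nat) (U : 'I_M -> 'I_M -> 'M[C]_M) (V : 'I_N -> 'I_N -> 'M[C]_N)
  (Q : 'M[C]_(M, N)) (p : nat).

Definition pr (q : 'I_M * 'I_N) : 'I_(M * N) := cast_ord (mxvec_cast M N) (enum_rank q).
Lemma unpair_pr q : unpair (pr q) = q.
Proof. by rewrite /unpair /pr cast_ordK enum_rankK. Qed.
Lemma pr_unpair x : pr (unpair x) = x.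
Proof. by rewrite /unpair /pr enum_valK cast_ordKV. Qed.

Definition Gf (ab : {ffun 'I_p -> 'I_M} * {ffun 'I_p -> 'I_N}) : {ffun 'I_p -> 'I_(M * N)} :=
  [ffun s => pr (ab.1 s, ab.2 s)].
Definition Gi (w : {ffun 'I_p -> 'I_(M * N)}) :=
  ([ffun s => (unpair (w s)).1], [ffun s => (unpair (w s)).2]).
Lemma GfK : cancel Gf Gi.
Proof.
by case=> a b; rewrite /Gi /Gf; congr (_, _); apply/ffunP => s; rewrite !ffunE unpair_pr.
Qed.
Lemma GiK : cancel Gi Gf.
Proof.
move=> w; apply/ffunP => s; rewrite /Gi /Gf !ffunE /=.
by case E: (unpair (w s)) => [x y] /=; rewrite -E pr_unpair.
Qed.

Definition phi (i j : 'I_M) (c d : 'I_N) : C := Q i c * Q j d / (Q i d * Q j c).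

Definition SS (a a' : {ffun 'I_p -> 'I_M}) (b b' : {ffun 'I_p -> 'I_N}) : C :=
  N%:R^-1 * \sum_(k : {ffun 'I_p.+1 -> 'I_N}) (k ord0 == k ord_max)%:R *
    \prod_(s < p) (phi (a s) (a' s) (k (widen_ord (leqnSn p) s)) (k (lift ord0 s)) *
                   V (b s) (b' s) (k (widen_ord (leqnSn p) s)) (k (lift ord0 s))).

Lemma tw_entry a a' b b' :
  ntr (wordmx (deformed_tensor Q U V) (Gf (a, b)) (Gf (a', b'))) =
  ntr (wordmx U a a') * SS a a' b b'.
Proof.
rewrite !ntr_wordmx -(ctrg_reindex unpair_pr pr_unpair) ctrg_pair.
under eq_bigr => ya _ do under eq_bigr => yb _ do
  under eq_bigr => t _ do rewrite /deformed_tensor mxE !ffunE !unpair_pr /=.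
under eq_bigr => ya _ do under eq_bigr => yb _ do rewrite prod3 mulrACA.
rewrite /ctrg /SS natrM invfM.
under eq_bigr => ya _ do rewrite -big_distrr /=.
rewrite -big_distrl /=.
rewrite /phi; ring.
Qed.

Definition Xpsi r (psi : 'I_r -> 'I_p -> 'I_N -> 'I_N -> C) : C :=
  \sum_(yb : {ffun 'I_r.+1 -> {ffun 'I_p -> 'I_N}}) (yb ord0 == yb ord_max)%:R *
   \prod_(t < r) (N%:R^-1 * \sum_(k : {ffun 'I_p.+1 -> 'I_N}) (k ord0 == k ord_max)%:R *
     \prod_(s < p) (psi t s (k (widen_ord (leqnSn p) s)) (k (lift ord0 s)) *
        V (yb (widen_ord (leqnSn r) t) s) (yb (lift ord0 t) s)
          (k (widen_ord (leqnSn p) s)) (k (lift ord0 s)))).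

Lemma cprW r : cpr (deformed_tensor Q U V) p r =
  \sum_(ya : {ffun 'I_r.+1 -> {ffun 'I_p -> 'I_M}})
    ((ya ord0 == ya ord_max)%:R *
     \prod_(t < r) ntr (wordmx U (ya (widen_ord (leqnSn r) t)) (ya (lift ord0 t)))) *
    Xpsi (fun t s c d => phi (ya (widen_ord (leqnSn r) t) s) (ya (lift ord0 t) s) c d).
Proof.
rewrite cpr_ctrg -(ctrg_reindex GfK GiK) ctrg_pair.
apply: eq_bigr => ya _; rewrite /Xpsi big_distrr; apply: eq_bigr => yb _ /=.
under eq_bigr => t _ do rewrite tw_entry.
by rewrite big_split /= mulrACA.
Qed.

Lemma cprV r : cpr V p r = Xpsi (fun (_ : 'I_r) _ _ _ => 1).
Proof.
rewrite cpr_ctrg /ctrg /Xpsi; apply: eq_bigr => yb _; congr (_ * _).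
apply: eq_bigr => t _; rewrite ntr_wordmx /ctrg; congr (_ * _).
apply: eq_bigr => k _; congr (_ * _); apply: eq_bigr => s _; by rewrite mul1r.
Qed.

Definition Yk r (kk : {ffun 'I_r -> {ffun 'I_p.+1 -> 'I_N}}) : C :=
  \sum_(yb : {ffun 'I_r.+1 -> {ffun 'I_p -> 'I_N}}) (yb ord0 == yb ord_max)%:R *
   \prod_(t < r) (N%:R^-1 * ((kk t ord0 == kk t ord_max)%:R *
     \prod_(s < p) V (yb (widen_ord (leqnSn r) t) s) (yb (lift ord0 t) s)
          (kk t (widen_ord (leqnSn p) s)) (kk t (lift ord0 s)))).

Definition Psi r (psi : 'I_r -> 'I_p -> 'I_N -> 'I_N -> C)
  (kk : {ffun 'I_r -> {ffun 'I_p.+1 -> 'I_N}}) : C :=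
  \prod_(t < r) \prod_(s < p) psi t s (kk t (widen_ord (leqnSn p) s)) (kk t (lift ord0 s)).

Lemma rearr (a b c d : C) : a * (b * (c * d)) = c * (a * (b * d)).
Proof. by ring. Qed.

Lemma Xpsi_eq r psi : @Xpsi r psi = \sum_kk Psi psi kk * Yk kk.
Proof.
rewrite /Xpsi.
under eq_bigr => yb _ do under eq_bigr => t _ do rewrite big_distrr /=.
under eq_bigr => yb _ do rewrite bigA_distr_bigA /= big_distrr /=.
rewrite exchange_big /=; apply: eq_bigr => kk _.
rewrite /Yk big_distrr /=; apply: eq_bigr => yb _.
rewrite /Psi.
under eq_bigr => t _ do rewrite big_split /= rearr.
by rewrite big_split /= mulrCA.
Qed.

Definition trw r (w : {ffun 'I_p -> {ffun 'I_r.+1 -> 'I_N}}) :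
  {ffun 'I_r.+1 -> {ffun 'I_p -> 'I_N}} := [ffun t => [ffun s => w s t]].
Definition trw' r (y : {ffun 'I_r.+1 -> {ffun 'I_p -> 'I_N}}) :
  {ffun 'I_p -> {ffun 'I_r.+1 -> 'I_N}} := [ffun s => [ffun t => y t s]].
Lemma trwK r : cancel (@trw r) (@trw' r).
Proof. by move=> w; apply/ffunP => s; apply/ffunP => t; rewrite !ffunE. Qed.
Lemma trwK' r : cancel (@trw' r) (@trw r).
Proof. by move=> w; apply/ffunP => s; apply/ffunP => t; rewrite !ffunE. Qed.

Lemma Zeq r (kk : {ffun 'I_r -> {ffun 'I_p.+1 -> 'I_N}}) :
  \sum_(yb : {ffun 'I_r.+1 -> {ffun 'I_p -> 'I_N}}) (yb ord0 == yb ord_max)%:R *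
   \prod_(t < r) \prod_(s < p) V (yb (widen_ord (leqnSn r) t) s) (yb (lift ord0 t) s)
          (kk t (widen_ord (leqnSn p) s)) (kk t (lift ord0 s)) =
  \prod_(s < p) ctrg (fun t (x y : 'I_N) =>
        V x y (kk t (widen_ord (leqnSn p) s)) (kk t (lift ord0 s))).
Proof.
rewrite /ctrg bigA_distr_bigA /=.
rewrite [LHS](sum_bij (@trwK r) (@trwK' r)).
apply: eq_bigr => w _; rewrite ffun_eq_ind exchange_big /= -big_split /=.
apply: eq_bigr => s _; rewrite !ffunE; congr (_ * _).
by apply: eq_bigr => t _; rewrite !ffunE.
Qed.

Lemma prod_assoc (I : Type) (r : seq I) (a b c : I -> C) :
  \prod_(i <- r) (a i * (b i * c i)) = \prod_(i <- r) (a i * b i) * \prod_(i <- r) c i.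
Proof. by rewrite -big_split; apply: eq_bigr => i _ /=; rewrite mulrA. Qed.

Lemma Yk_ge0 r kk : positive_model (primemx V) -> 0 <= @Yk r kk.
Proof.
move=> posV; rewrite /Yk.
under eq_bigr => yb _ do rewrite prod_assoc mulrCA.
rewrite -big_distrr /=; apply: mulr_ge0.
  apply: prodr_ge0 => t _; apply: mulr_ge0; first by rewrite invr_ge0 ler0n.
  exact: ler0n.
rewrite Zeq; apply: prodr_ge0 => s _.
rewrite -(eq_ctrg (f := fun t x y => primemx V (kk t (widen_ord (leqnSn p) s))
                                             (kk t (lift ord0 s)) x y)); last first.
  by move=> t x y; rewrite mxE.
rewrite -tr_foldr; apply: tr_ge0; exact: posV.
Qed.

Lemma key r (psi : 'I_r -> 'I_p -> 'I_N -> 'I_N -> C) :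
  positive_model (primemx V) -> (forall t s c d, `|psi t s c d| = 1) ->
  `|Xpsi psi| <= Xpsi (fun (_ : 'I_r) _ _ _ => 1).
Proof.
move=> posV npsi; rewrite !Xpsi_eq.
apply: le_trans (ler_norm_sum _ _ _) _; apply: ler_sum => kk _.
rewrite normrM (ger0_norm (Yk_ge0 kk posV)) /Psi normr_prod.
rewrite big1 ?mul1r; last by move=> t _; rewrite normr_prod big1.
by rewrite big1 ?mul1r // => t _; rewrite big1.
Qed.

End W.
End Main.

Theorem theorem2p9 (R : realType) (M N : nat)
  (U : 'I_M -> 'I_M -> 'M[R[i]]_M) (V : 'I_N -> 'I_N -> 'M[R[i]]_N)
  (Q : 'M[R[i]]_(M, N)) :
  projective_model U -> projective_model V ->
  positive_model U -> positive_model (primemx V) ->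
  (forall i c, `|Q i c| = 1) ->
  forall p r : nat, (0 < p)%N -> (0 < r)%N ->
    `|cpr (deformed_tensor Q U V) p r| <= cpr U p r * cpr V p r.
Proof.
move=> _ _ posU posV nQ p r _ _.
rewrite cprW (cprV V) (cpr_ctrg U) /ctrg big_distrl /=.
apply: le_trans (ler_norm_sum _ _ _) _; apply: ler_sum => ya _.
have A0 : 0 <= (ya ord0 == ya ord_max)%:R *
     \prod_(t < r) ntr (wordmx U (ya (widen_ord (leqnSn r) t)) (ya (lift ord0 t))).
  by apply: mulr_ge0; [exact: ler0n | apply: prodr_ge0 => t _; exact: posU].
rewrite normrM (ger0_norm A0); apply: (ler_wpM2l A0).
apply: key => // t s c d.
by rewrite /phi normf_div !normrM !nQ !mulr1 divr1.
Qed.
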